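(* Let $(X,\|\cdot\|)$ be a Banach space, $B_X=\{x\in X:\|x\|\le1\}$, and let $B\subset X\setminus B_X$ be nonempty with $\mathrm{dist}(B,B_X)\ge1$. Suppose the ordered pair $(B_X,B)$ has the $UC$ property and there exists $p\in B$ with $\mathrm{dist}(p,B_X)=\mathrm{dist}(B,B_X)$. If $\{x_n\}_{n=1}^\infty,\{z_n\}_{n=1}^\infty\subset B_X$ and real numbers $\lambda_n$ satisfy $\lim_{n\to\infty}\left\|\frac{x_n+z_n}{2}\right\|=1$ and $x_n+z_n=|\lambda_n|\,p$ for all $n$, then $\lim_{n\to\infty}\|x_n-z_n\|=0$.
   Context: $\mathrm{dist}(A,B)=\inf\{\|a-b\|:a\in A,b\in B\}$ and $\mathrm{dist}(p,A)=\mathrm{dist}(\{p\},A)$. The ordered pair $(A,B)$ has the $UC$ property if for all sequences $\{x_n\},\{z_n\}\subset A$, $\{y_n\}\subset B$ with $\lim_n\|x_n-y_n\|=\lim_n\|z_n-y_n\|=\mathrm{dist}(A,B)$ one has $\lim_n\|x_n-z_n\|=0$. *)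

(* Defs.v *)
From HB Require Import structures.
From mathcomp Require Import all_boot all_order all_algebra.
From mathcomp Require Import all_classical all_reals all_analysis.
Set Implicit Arguments. Unset Strict Implicit. Unset Printing Implicit Defensive.
Import Order.TTheory GRing.Theory Num.Theory.
Import numFieldNormedType.Exports.
Local Open Scope classical_set_scope.
Local Open Scope ring_scope.

Definition setdist {R : realType} {X : normedModType R} (A B : set X) : R :=
  inf [set `|a - b| | a in A & b in B].

Definition ptdist {R : realType} {X : normedModType R} (p : X) (A : set X) : R :=
  setdist [set p] A.

Definition unit_ball {R : realType} (X : normedModType R) : set X :=
  [set x : X | `|x| <= 1].

Definition UC_prop {R : realType} {X : normedModType R} (A B : set X) : Prop :=
  forall (x z y : nat -> X),
    (forall n, A (x n)) -> (forall n, A (z n)) -> (forall n, B (y n)) ->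
    (fun n => `|x n - y n|) @ \oo --> setdist A B ->
    (fun n => `|z n - y n|) @ \oo --> setdist A B ->
    (fun n => `|x n - z n|) @ \oo --> (0 : R).

(* Main.v *)
Require Import Defs.
From HB Require Import structures.
From mathcomp Require Import all_boot all_order all_algebra.
From mathcomp Require Import all_classical all_reals all_analysis.
From mathcomp Require Import ring lra.
Import Order.TTheory GRing.Theory Num.Theory.
Import numFieldNormedType.Exports.
Local Open Scope classical_set_scope.
Local Open Scope ring_scope.

Lemma key (R : realType) (X : normedModType R) (x z : nat -> X) (p : X)
  (lam : nat -> R) (d : R) :
  (forall n, `|x n| <= 1) -> (forall n, `|z n| <= 1) ->
  (forall n, d <= `|p - x n|) -> `|p| - 1 <= d -> 1 <= d ->
  (fun n => `|x n + z n|) @ \oo --> (2 : R) ->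
  (forall n, x n + z n = `|lam n| *: p) ->
  (fun n => `|x n - p|) @ \oo --> d.
Proof.
move=> hx hz hd hp d1 ht hs.
have Wle n : `|x n + z n| * `|x n - p| <= `| `|x n + z n| - `|p| | + `|p|.
  rewrite hs normrZ normr_id.
  set m := `|lam n|.
  have m0 : 0 <= m by rewrite /m normr_ge0.
  have e : m * `|x n - p| = `|(m - 1) *: x n - z n|.
    rewrite -[m in LHS]normr_id -normrZ; congr `|_|.
    by rewrite scalerBr -hs scalerBl scale1r opprD addrA.
  have h1 : m * `|x n - p| <= `|m - 1| + 1.
    rewrite e; apply: (le_trans (ler_normB _ _)); rewrite normrZ.
    apply: lerD => //; rewrite -[X in _ <= X]mulr1.
    by apply: ler_wpM2l => //; rewrite normr_ge0.
  have e2 : `|m * `|p| - `|p| | = `|m - 1| * `|p|.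
    by rewrite -{2}[`|p|]mul1r -mulrBl normrM normr_id.
  rewrite e2.
  have p0 := normr_ge0 p.
  have a0 := normr_ge0 (x n - p).
  have hm := normr_ge0 (m - 1).
  nra.
pose W n := `|x n + z n| * `|x n - p|.
pose c := 2 * d - (`|2 - `|p| | + `|p|).
have c0 : 0 <= c.
  rewrite /c; case: (lerP `|p| 2) => h.
    move: hp d1 => hp d1; lra.
  move: hp d1 => hp d1; lra.
have HW : W @ \oo --> 2 * d.
  apply: (@squeeze_cvgr _ _ _ _ (fun n => `|x n + z n| * d)
     (fun n => (`| `|x n + z n| - `|p| | + `|p|) + c)).
  - near=> n; apply/andP; split.
      apply: ler_wpM2l; first exact: normr_ge0.
      by rewrite distrC.
    by apply: (le_trans (Wle n)); rewrite lerDl.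
  - by apply: cvgM => //; exact: cvg_cst.
  - have -> : 2 * d = (`|2 - `|p| | + `|p|) + c by rewrite /c; ring.
    apply: cvgD; last exact: cvg_cst.
    apply: cvgD; last exact: cvg_cst.
    apply: cvg_norm; apply: cvgB => //; exact: cvg_cst.
have HL : (fun n => W n * (`|x n + z n|)^-1) @ \oo --> 2 * d * 2^-1.
  have h20 : (2:R) != 0 by rewrite pnatr_eq0.
  exact: (cvgM HW (cvgV h20 ht)).
have -> : d = 2 * d * 2^-1 by rewrite mulrAC mulfV ?mul1r.
apply: (cvg_trans _ HL). apply: near_eq_cvg.
have h12 : (1:R) < 2 by lra.
have hgt := cvgr_gt _ ht 1 h12.
near=> n.
have hn : 1 < `|x n + z n| by near: n; exact: hgt.
rewrite /W mulrAC mulfV ?mul1r //.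
by apply: lt0r_neq0; exact: (lt_trans ltr01 hn).
Unshelve. all: by end_near.
Qed.

Theorem lemma46 (R : realType) (X : completeNormedModType R) (B : set X)
  (p : X) (x z : nat -> X) (lam : nat -> R) :
  B `<=` ~` (@unit_ball R X) ->
  B !=set0 ->
  1 <= setdist B ((@unit_ball R X)) ->
  UC_prop ((@unit_ball R X)) B ->
  B p ->
  ptdist p ((@unit_ball R X)) = setdist B ((@unit_ball R X)) ->
  (forall n, (@unit_ball R X) (x n)) ->
  (forall n, (@unit_ball R X) (z n)) ->
  (fun n => `|2^-1 *: (x n + z n)|) @ \oo --> (1 : R) ->
  (forall n, x n + z n = `|lam n| *: p) ->
  (fun n => `|x n - z n|) @ \oo --> (0 : R).
Proof.
move=> HB _ d1 HUC Bp Hpd hx hz hs hsum.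
set U := @unit_ball R X.
set d := setdist B U.
move: Hpd hx hz d1; rewrite -/U -/d => Hpd hx hz d1.
have hd : forall w, U w -> d <= `|p - w|.
  move=> w Uw; rewrite /d /setdist.
  apply: ge_inf; last by exists p => //; exists w.
  by exists 0 => y [a _ [b _ <-]]; rewrite normr_ge0.
have hp : `|p| - 1 <= d.
  rewrite -Hpd /ptdist /setdist; apply: lb_le_inf.
    by exists `|p - 0|; exists p => //; exists 0 => //; rewrite /U /unit_ball /= normr0 ler01.
  move=> y [a -> [b Ub <-]].
  apply: le_trans (lerB_dist _ _); apply: lerB => //.
have ht : (fun n => `|x n + z n|) @ \oo --> (2 : R).
  have e : forall n, `|x n + z n| = 2 * `|2^-1 *: (x n + z n)|.
    move=> n; rewrite normrZ mulrA ger0_norm ?invr_ge0 ?ler0n //.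
    by rewrite mulfV ?mul1r // pnatr_eq0.
  rewrite (funext e) -[X in _ --> X]mulr1.
  apply: cvgM => //; exact: cvg_cst.
have Hsym : setdist U B = d.
  rewrite /d /setdist; congr inf; apply/seteqP; split => y.
    by move=> [a Ua [b Bb <-]]; exists b => //; exists a => //; rewrite distrC.
  by move=> [a Ua [b Bb <-]]; exists b => //; exists a => //; rewrite distrC.
have cx : (fun n => `|x n - p|) @ \oo --> setdist U B.
  rewrite Hsym; apply: (@key R X x z p lam) => //.
  by move=> n; apply: hd.
have cz : (fun n => `|z n - p|) @ \oo --> setdist U B.
  rewrite Hsym; apply: (@key R X z x p lam) => //.
  - by move=> n; apply: hd.
  - by under eq_fun do rewrite addrC.
  - by move=> n; rewrite addrC.
exact: (HUC x z (fun _ => p) hx hz (fun _ => Bp) cx cz).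
Qed.
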